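(* Let $a,b\in\mathbb{R}$ and let $f(z)=\overline{z}^4-z^2-az-b$ for $z\in\mathbb{C}$. Suppose $\Delta_1(a,b)\,\Delta_2(a,b)\,\Delta_3(a,b)\neq 0$. Then the number $\mathscr{Z}_f$ of distinct zeros of $f$ in $\mathbb{C}$ satisfies $4\le \mathscr{Z}_f\le 10$. Both bounds are attained for such parameters.
   Context: Write $z=x+iy$. Then $f(z)=p_1(x,y)-i\,y\,p_2(x,y)$, where $p_1(x,y)=x^4+y^4-6x^2y^2-x^2+y^2-ax-b$ and $p_2(x,y)=4xy^2-4x^3-2x-a$. The polynomials $\Delta_1,\Delta_2,\Delta_3\in\mathbb{Z}[a,b]$ are defined by $\Delta_1=36a^2+125a^4-144b-560a^2b+384b^2-256b^3$, $\Delta_2=-6912-14976a^2+13552a^4-32616a^6+91125a^8+13824b+8832a^2b-36000a^4b-699840a^6b+66816b^2+566272a^2b^2+1645056a^4b^2-278528b^3-1144832a^2b^3-152064a^4b^3+401408b^4+589824a^2b^4-262144b^5+65536b^6$, $\Delta_3=-4a^2+27a^4+16b-144a^2b+128b^2+256b^3$. The curve $\{(a,b)\in\mathbb{R}^2:\Delta_1\Delta_2\Delta_3=0\}$ is the discriminant curve of the family. Its complement in $\mathbb{R}^2$ has finitely many connected components, and the number of zeros of $f$ is constant on each component. *)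

(* Defs.v *)
From Stdlib Require Import Reals List.
From Coquelicot Require Import Coquelicot.
Open Scope R_scope.

Definition f (a b : R) (z : C) : C :=
  Cminus (Cminus (Cminus
    (Cmult (Cmult (Cconj z) (Cconj z)) (Cmult (Cconj z) (Cconj z)))
    (Cmult z z)) (Cmult (RtoC a) z)) (RtoC b).

Definition Delta1 (a b : R) : R :=
  36*a^2 + 125*a^4 - 144*b - 560*a^2*b + 384*b^2 - 256*b^3.

Definition Delta2 (a b : R) : R :=
  -6912 - 14976*a^2 + 13552*a^4 - 32616*a^6 + 91125*a^8 + 13824*b
  + 8832*a^2*b - 36000*a^4*b - 699840*a^6*b + 66816*b^2 + 566272*a^2*b^2
  + 1645056*a^4*b^2 - 278528*b^3 - 1144832*a^2*b^3 - 152064*a^4*b^3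
  + 401408*b^4 + 589824*a^2*b^4 - 262144*b^5 + 65536*b^6.

Definition Delta3 (a b : R) : R :=
  -4*a^2 + 27*a^4 + 16*b - 144*a^2*b + 128*b^2 + 256*b^3.

Definition num_zeros (a b : R) (n : nat) : Prop :=
  exists l : list C, NoDup l /\ (forall z : C, In z l <-> f a b z = 0) /\ length l = n.

(* Main.v *)
Require Import Defs.
From Stdlib Require Import Reals List Lra Psatz Classical ClassicalEpsilon.
From Coquelicot Require Import Coquelicot.
Open Scope R_scope.
Definition p1 (a b x y : R) : R := x^4 + y^4 - 6*x^2*y^2 - x^2 + y^2 - a*x - b.
Definition P2 (a x y : R) : R := 4*x*y^2 - 4*x^3 - 2*x - a.
Lemma f_eq (a b x y : R) : Defs.f a b (x,y) = (p1 a b x y, y * P2 a x y).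
Proof. unfold Defs.f, p1, P2, Cminus, Cmult, Cconj, Copp, Cplus, RtoC; simpl.
 f_equal; ring. Qed.
Lemma zero_iff a b x y : Defs.f a b (x,y) = 0 <-> p1 a b x y = 0 /\ y * P2 a x y = 0.
Proof. rewrite f_eq. unfold RtoC. split.
  - intros H. injection H. tauto.
  - intros [H1 H2]. rewrite H1, H2. reflexivity. Qed.
Definition G (a b x : R) : R := 64*x^6+32*x^4+32*a*x^3+(16*b-12)*x^2-8*a*x-a^2.
Lemma G_p1 b x y : G (4*x*y^2-4*x^3-2*x) b x = -16*x^2 * p1 (4*x*y^2-4*x^3-2*x) b x y.
Proof. unfold G, p1. ring. Qed.
Definition s (a x : R) : R := (4*x^3+2*x+a)/(4*x).
Definition pts (a x : R) : list C := (x, sqrt (s a x)) :: (x, - sqrt (s a x)) :: nil.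
Lemma pts_len a l : length (flat_map (pts a) l) = (2 * length l)%nat.
Proof. induction l; simpl; auto. rewrite IHl. lia. Qed.
Lemma in_pts a x y : x <> 0 -> y <> 0 -> P2 a x y = 0 -> In (x,y) (pts a x).
Proof.
  intros hx hy hP. unfold P2 in hP.
  assert (hs : s a x = Rsqr y).
  { unfold s, Rsqr. replace a with (4*x*y^2 - 4*x^3 - 2*x) by lra. field. auto. }
  unfold pts. rewrite hs, sqrt_Rsqr_abs. unfold Rabs. destruct (Rcase_abs y).
  - right; left. f_equal. ring.
  - left. reflexivity.
Qed.

Lemma enum_from_cover (P : C -> Prop) (L : list C) :
  (forall z, P z -> In z L) ->
  exists l, NoDup l /\ (forall z, In z l <-> P z) /\ (length l <= length L)%nat.
Proof.
  intros HL.
  assert (dec : forall z w : C, {z = w} + {z <> w}) by (intros; apply excluded_middle_informative).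
  set (g := fun z => if excluded_middle_informative (P z) then true else false).
  exists (nodup dec (filter g L)). split; [apply NoDup_nodup|split].
  - intros z. rewrite nodup_In, filter_In. unfold g.
    destruct (excluded_middle_informative (P z)) as [p|p]; split; intros H.
    + exact p.
    + split; auto.
    + destruct H as [_ H]; discriminate.
    + tauto.
  - apply NoDup_incl_length; [apply NoDup_nodup|].
    intros z Hz. rewrite nodup_In, filter_In in Hz. tauto.
Qed.

Lemma cover_R (P : R -> Prop) n :
  (forall l, NoDup l -> (forall x, In x l -> P x) -> (length l <= n)%nat) ->
  exists L, (forall x, P x -> In x L) /\ (length L <= n)%nat.
Proof.
  intros Hb.
  assert (K : forall k l, NoDup l -> (forall x, In x l -> P x) -> (n - length l <= k)%nat ->
     exists L, (forall x, P x -> In x L) /\ (length L <= n)%nat).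
  { induction k; intros l Hl HP Hk.
    - destruct (classic (forall x, P x -> In x l)) as [H|H].
      + exists l; split; auto.
      + exfalso. apply not_all_ex_not in H. destruct H as [x Hx].
        apply imply_to_and in Hx. destruct Hx as [Px Nx].
        assert (Hc := Hb (x::l) (NoDup_cons x Nx Hl)).
        assert (length (x::l) <= n)%nat.
        { apply Hc. intros y [<-|Hy]; auto. }
        simpl in *. lia.
    - destruct (classic (forall x, P x -> In x l)) as [H|H].
      + exists l; split; auto.
      + apply not_all_ex_not in H. destruct H as [x Hx].
        apply imply_to_and in Hx. destruct Hx as [Px Nx].
        apply (IHk (x::l)). constructor; auto.
        intros y [<-|Hy]; auto.
        assert (length (x::l) <= n)%nat.
        { apply Hb. constructor; auto. intros y [<-|Hy]; auto. }
        simpl in *. lia. }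
  apply (K n nil); simpl; auto. constructor. tauto. lia.
Qed.

Lemma bound1 (P : R -> Prop) :
  (forall x y, x < y -> P x -> P y -> False) ->
  forall l, NoDup l -> (forall x, In x l -> P x) -> (length l <= 1)%nat.
Proof.
  intros H l Hl HP. destruct l as [|x [|y l]]; simpl; try lia.
  exfalso. inversion Hl; subst. assert (x <> y) by (intro; subst; simpl in *; tauto).
  destruct (Rtotal_order x y) as [h|[h|h]]; try tauto.
  - apply (H x y); auto; apply HP; simpl; auto.
  - apply (H y x); auto; apply HP; simpl; auto.
Qed.

Lemma bound2 (P : R -> Prop) :
  (forall x y z, x < y -> y < z -> P x -> P y -> P z -> False) ->
  forall l, NoDup l -> (forall x, In x l -> P x) -> (length l <= 2)%nat.
Proof.
  intros H l Hl HP. destruct l as [|x [|y [|z l]]]; simpl; try lia.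
  exfalso. inversion Hl as [|? ? N1 Hl1]; subst. inversion Hl1 as [|? ? N2 Hl2]; subst.
  assert (x <> y) by (intro; subst; simpl in *; tauto).
  assert (x <> z) by (intro; subst; simpl in *; tauto).
  assert (y <> z) by (intro; subst; simpl in *; tauto).
  assert (Px : P x) by (apply HP; simpl; auto).
  assert (Py : P y) by (apply HP; simpl; auto).
  assert (Pz : P z) by (apply HP; simpl; auto).
  destruct (Rtotal_order x y) as [h1|[h1|h1]]; try tauto;
  destruct (Rtotal_order x z) as [h2|[h2|h2]]; try tauto;
  destruct (Rtotal_order y z) as [h3|[h3|h3]]; try tauto.
  all: first [ apply (H x y z); auto; lra | apply (H x z y); auto; lra
             | apply (H y x z); auto; lra | apply (H y z x); auto; lra
             | apply (H z x y); auto; lra | apply (H z y x); auto; lra | lra].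
Qed.

Lemma bound4 (P : R -> Prop) :
  (forall x1 x2 x3 x4 x5, x1 <> x2 -> x1 <> x3 -> x1 <> x4 -> x1 <> x5 ->
     x2 <> x3 -> x2 <> x4 -> x2 <> x5 -> x3 <> x4 -> x3 <> x5 -> x4 <> x5 ->
     P x1 -> P x2 -> P x3 -> P x4 -> P x5 -> False) ->
  forall l, NoDup l -> (forall x, In x l -> P x) -> (length l <= 4)%nat.
Proof.
  intros H l Hl HP. destruct l as [|x1 [|x2 [|x3 [|x4 [|x5 l]]]]]; simpl; try lia.
  exfalso.
  inversion Hl as [|? ? N1 H1]; subst. inversion H1 as [|? ? N2 H2]; subst.
  inversion H2 as [|? ? N3 H3]; subst. inversion H3 as [|? ? N4 H4]; subst.
  simpl in N1, N2, N3, N4.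
  apply (H x1 x2 x3 x4 x5); try (intro; subst; tauto); apply HP; simpl; tauto.
Qed.

Lemma lin_roots p0 x y : x + p0 = 0 -> y + p0 = 0 -> x = y.
Proof. lra. Qed.

Lemma quad_roots p1 p0 x1 x2 x3 : x1 <> x2 -> x1 <> x3 -> x2 <> x3 ->
  x1^2 + p1*x1 + p0 = 0 -> x2^2 + p1*x2 + p0 = 0 -> x3^2 + p1*x3 + p0 = 0 -> False.
Proof.
  intros n12 n13 n23 e1 e2 e3.
  assert (f2 : x2 + (x1 + p1) = 0).
  { assert (E : (x2 - x1) * (x2 + (x1 + p1)) = 0) by (rewrite <- (Rminus_diag_eq _ _ (eq_trans e2 (eq_sym e1))); ring).
    apply Rmult_integral in E. destruct E; [exfalso; apply n12; lra|auto]. }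
  assert (f3 : x3 + (x1 + p1) = 0).
  { assert (E : (x3 - x1) * (x3 + (x1 + p1)) = 0) by (rewrite <- (Rminus_diag_eq _ _ (eq_trans e3 (eq_sym e1))); ring).
    apply Rmult_integral in E. destruct E; [exfalso; apply n13; lra|auto]. }
  apply n23. lra.
Qed.

Lemma div_root (x y Q L1 L2 : R) : x <> y -> L1 = 0 -> L2 = 0 -> (x - y) * Q = L1 - L2 -> Q = 0.
Proof.
  intros n e1 e2 E. rewrite e1, e2 in E.
  assert (E' : (x - y) * Q = 0) by lra.
  apply Rmult_integral in E'. destruct E'; [exfalso; apply n; lra|auto].
Qed.

Lemma cubic_roots p2 p1 p0 x1 x2 x3 x4 : x1 <> x2 -> x1 <> x3 -> x1 <> x4 ->
  x2 <> x3 -> x2 <> x4 -> x3 <> x4 ->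
  x1^3 + p2*x1^2 + p1*x1 + p0 = 0 -> x2^3 + p2*x2^2 + p1*x2 + p0 = 0 ->
  x3^3 + p2*x3^2 + p1*x3 + p0 = 0 -> x4^3 + p2*x4^2 + p1*x4 + p0 = 0 -> False.
Proof.
  intros n12 n13 n14 n23 n24 n34 e1 e2 e3 e4.
  apply (quad_roots (x1 + p2) (x1^2 + p2*x1 + p1) x2 x3 x4); auto.
  - apply (div_root x2 x1 _ _ _ (not_eq_sym n12) e2 e1). ring.
  - apply (div_root x3 x1 _ _ _ (not_eq_sym n13) e3 e1). ring.
  - apply (div_root x4 x1 _ _ _ (not_eq_sym n14) e4 e1). ring.
Qed.

Lemma quartic_roots p3 p2 p1 p0 x1 x2 x3 x4 x5 : x1 <> x2 -> x1 <> x3 -> x1 <> x4 -> x1 <> x5 ->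
  x2 <> x3 -> x2 <> x4 -> x2 <> x5 -> x3 <> x4 -> x3 <> x5 -> x4 <> x5 ->
  x1^4 + p3*x1^3 + p2*x1^2 + p1*x1 + p0 = 0 -> x2^4 + p3*x2^3 + p2*x2^2 + p1*x2 + p0 = 0 ->
  x3^4 + p3*x3^3 + p2*x3^2 + p1*x3 + p0 = 0 -> x4^4 + p3*x4^3 + p2*x4^2 + p1*x4 + p0 = 0 ->
  x5^4 + p3*x5^3 + p2*x5^2 + p1*x5 + p0 = 0 -> False.
Proof.
  intros n12 n13 n14 n15 n23 n24 n25 n34 n35 n45 e1 e2 e3 e4 e5.
  apply (cubic_roots (x1 + p3) (x1^2 + p3*x1 + p2) (x1^3 + p3*x1^2 + p2*x1 + p1) x2 x3 x4 x5); auto.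
  - apply (div_root x2 x1 _ _ _ (not_eq_sym n12) e2 e1). ring.
  - apply (div_root x3 x1 _ _ _ (not_eq_sym n13) e3 e1). ring.
  - apply (div_root x4 x1 _ _ _ (not_eq_sym n14) e4 e1). ring.
  - apply (div_root x5 x1 _ _ _ (not_eq_sym n15) e5 e1). ring.
Qed.

Definition q (a b x : R) : R := x^4 - x^2 - a*x - b.

Lemma q_cover a b : exists L, (forall x, q a b x = 0 -> In x L) /\ (length L <= 4)%nat.
Proof.
  apply cover_R. apply bound4. intros x1 x2 x3 x4 x5 ? ? ? ? ? ? ? ? ? ? e1 e2 e3 e4 e5.
  unfold q in *.
  apply (quartic_roots 0 (-1) (-a) (-b) x1 x2 x3 x4 x5); auto; lra.
Qed.

Ltac pos := repeat (match goal with
  | |- 0 < _ + _ => apply Rplus_lt_0_compat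
  | |- 0 < _ * _ => apply Rmult_lt_0_compat
  | |- 0 < _ ^ _ => apply pow_lt end); try lra.

Definition Gt (c b t : R) : R := 64*t^6+384*c*t^5+(32+960*c^2)*t^4+(64*c+1152*c^3)*t^3
  + (576*c^4+16*b-12)*t^2 + 8*c*(4*b-1-4*c^2)*t + 16*c^2*(b-c^2-5*c^4).

Lemma G_shift c b t : G (4*c^3+2*c) b (-c-t) = Gt c b t.
Proof. unfold G, Gt. ring. Qed.

Lemma G_pos_unique a b x1 x2 : 0 < a -> 0 < x1 -> x1 < x2 -> G a b x1 = 0 -> G a b x2 = 0 -> False.
Proof.
  intros ha h1 h12 e1 e2.
  assert (E : x1^2 * G a b x2 - x2^2 * G a b x1 = (x2-x1) *
     (x1^2*x2^2*(64*(x2+x1)*(x2^2+x1^2) + 32*(x2+x1) + 32*a) + 8*a*x1*x2 + a^2*(x1+x2)))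
    by (unfold G; ring).
  rewrite e1, e2 in E.
  assert (0 < (x2-x1) * (x1^2*x2^2*(64*(x2+x1)*(x2^2+x1^2) + 32*(x2+x1) + 32*a) + 8*a*x1*x2 + a^2*(x1+x2))) by pos.
  lra.
Qed.

Lemma Gt_three c b t1 t2 t3 : 0 < c -> 0 < t1 -> t1 < t2 -> t2 < t3 ->
  Gt c b t1 = 0 -> Gt c b t2 = 0 -> Gt c b t3 = 0 -> False.
Proof.
  intros hc h1 h12 h23 e1 e2 e3.
  set (A := 576*c^4+16*b-12). set (B := 8*c*(4*b-1-4*c^2)). set (C0 := 16*c^2*(b-c^2-5*c^4)).
  destruct (Rlt_or_le C0 0) as [hC|hC].
  - destruct (Rle_or_lt B 0) as [hB|hB].
    +
      assert (E : t1^2 * Gt c b t2 - t2^2 * Gt c b t1 = (t2-t1) *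
        (t1^2*t2^2*(64*(t1+t2)*(t1^2+t2^2) + 384*c*(t1^2+t1*t2+t2^2) + (32+960*c^2)*(t1+t2) + (64*c+1152*c^3))
         - B*t1*t2 - C0*(t1+t2))) by (unfold Gt, B, C0; ring).
      rewrite e1, e2 in E.
      assert (P1 : 0 < t1^2*t2^2*(64*(t1+t2)*(t1^2+t2^2) + 384*c*(t1^2+t1*t2+t2^2) + (32+960*c^2)*(t1+t2) + (64*c+1152*c^3))) by pos.
      assert (P2 : 0 <= - B*t1*t2) by (assert (0 < t1*t2) by pos; nra).
      assert (P3 : 0 < - C0*(t1+t2)) by nra.
      assert (0 < (t2-t1) * (t1^2*t2^2*(64*(t1+t2)*(t1^2+t2^2) + 384*c*(t1^2+t1*t2+t2^2) + (32+960*c^2)*(t1+t2) + (64*c+1152*c^3))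
         - B*t1*t2 - C0*(t1+t2))) by (apply Rmult_lt_0_compat; lra).
      lra.
    +
      assert (hA : 0 <= A).
      { unfold A. unfold B, C0 in *.
        assert (b - c^2 - 5*c^4 < 0) by (assert (0 < 16*c^2) by pos; nra).
        assert (4*b - 1 - 4*c^2 > 0) by (assert (0 < 8*c) by pos; nra).
        nra. }
      assert (E : Gt c b t2 - Gt c b t1 = (t2-t1) *
        (64*(t2^5+t2^4*t1+t2^3*t1^2+t2^2*t1^3+t2*t1^4+t1^5)
         + 384*c*(t2^4+t2^3*t1+t2^2*t1^2+t2*t1^3+t1^4)
         + (32+960*c^2)*(t2^3+t2^2*t1+t2*t1^2+t1^3)
         + (64*c+1152*c^3)*(t2^2+t2*t1+t1^2) + A*(t2+t1) + B)) by (unfold Gt, A, B; ring).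
      rewrite e1, e2 in E.
      assert (0 < 64*(t2^5+t2^4*t1+t2^3*t1^2+t2^2*t1^3+t2*t1^4+t1^5)
         + 384*c*(t2^4+t2^3*t1+t2^2*t1^2+t2*t1^3+t1^4)
         + (32+960*c^2)*(t2^3+t2^2*t1+t2*t1^2+t1^3)
         + (64*c+1152*c^3)*(t2^2+t2*t1+t1^2)) by pos.
      assert (0 <= A*(t2+t1)) by (apply Rmult_le_pos; lra).
      nra.
  - destruct (Rle_or_lt 0 B) as [hB|hB].
    + assert (E : (t3-t2)*t2^2*t3^2*Gt c b t1 - (t3-t1)*t1^2*t3^2*Gt c b t2 + (t2-t1)*t1^2*t2^2*Gt c b t3
        = (t3-t2)*(t2-t1)*(t3-t1) * ((t1*t2*t3)^2 * (64*(t1^2+t2^2+t3^2+t1*t2+t1*t3+t2*t3)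
            + 384*c*(t1+t2+t3) + (32+960*c^2)) + B*(t1*t2*t3) + C0*(t1*t2+t1*t3+t2*t3)))
        by (unfold Gt, B, C0; ring).
      rewrite e1, e2, e3 in E.
      assert (0 < (t1*t2*t3)^2 * (64*(t1^2+t2^2+t3^2+t1*t2+t1*t3+t2*t3)
            + 384*c*(t1+t2+t3) + (32+960*c^2))) by pos.
      assert (0 <= B*(t1*t2*t3)) by (apply Rmult_le_pos; [lra|]; left; pos).
      assert (0 <= C0*(t1*t2+t1*t3+t2*t3)) by (apply Rmult_le_pos; [lra|]; left; pos).
      assert (0 < (t3-t2)*(t2-t1)*(t3-t1)) by pos.
      nra.
    + assert (E : (t3-t2)*t2*t3*Gt c b t1 - (t3-t1)*t1*t3*Gt c b t2 + (t2-t1)*t1*t2*Gt c b t3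
        = (t3-t2)*(t2-t1)*(t3-t1) * ((t1*t2*t3) * (64*(t1^3+t2^3+t3^3+t1^2*t2+t1^2*t3+t2^2*t1+t2^2*t3+t3^2*t1+t3^2*t2+t1*t2*t3)
            + 384*c*(t1^2+t2^2+t3^2+t1*t2+t1*t3+t2*t3) + (32+960*c^2)*(t1+t2+t3) + (64*c+1152*c^3)) + C0))
        by (unfold Gt, C0; ring).
      rewrite e1, e2, e3 in E.
      assert (0 < (t1*t2*t3) * (64*(t1^3+t2^3+t3^3+t1^2*t2+t1^2*t3+t2^2*t1+t2^2*t3+t3^2*t1+t3^2*t2+t1*t2*t3)
            + 384*c*(t1^2+t2^2+t3^2+t1*t2+t1*t3+t2*t3) + (32+960*c^2)*(t1+t2+t3) + (64*c+1152*c^3))) by pos.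
      assert (0 < (t3-t2)*(t2-t1)*(t3-t1)) by pos.
      nra.
Qed.

Lemma h_root a : 0 < a -> exists c, 0 < c /\ 4*c^3+2*c = a.
Proof.
  intros ha.
  destruct (IVT (fun x => 4*x^3+2*x-a) 0 a) as [c [[hc1 _] hc2]]; try lra.
  - reg.
  - nra.
  - exists c. split; [|lra]. destruct hc1 as [h|h]; auto. subst. lra.
Qed.

Lemma cover_pos a b : 0 < a -> exists L, (forall z, Defs.f a b z = 0 -> In z L) /\ (length L <= 10)%nat.
Proof.
  intros ha. destruct (h_root a ha) as [c [hc hca]].
  destruct (q_cover a b) as [L0 [HL0 hl0]].
  destruct (cover_R (fun x => 0 < x /\ G a b x = 0) 1) as [L1 [HL1 hl1]].
  { apply bound1. intros x y hxy [hx ex] [hy ey]. exact (G_pos_unique a b x y ha hx hxy ex ey). }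
  destruct (cover_R (fun t => 0 < t /\ Gt c b t = 0) 2) as [L2 [HL2 hl2]].
  { apply bound2. intros x y z hxy hyz [hx ex] [hy ey] [hz ez]. exact (Gt_three c b x y z hc hx hxy hyz ex ey ez). }
  exists (map (fun x => (x,0)) L0 ++ flat_map (pts a) (L1 ++ map (fun t => -c - t) L2)).
  split.
  - intros [x y] Hz. apply zero_iff in Hz. destruct Hz as [e1 e2].
    apply in_or_app. destruct (Req_dec y 0) as [hy|hy].
    + left. subst y. apply (in_map (fun x => (x,0))). apply HL0. unfold q. unfold p1 in e1. lra.
    + right. assert (hP : P2 a x y = 0).
      { apply Rmult_integral in e2. destruct e2; [contradiction|auto]. }
      assert (hx : x <> 0) by (intro; subst; unfold P2 in hP; lra).
      assert (hG : G a b x = 0).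
      { unfold P2 in hP. replace a with (4*x*y^2-4*x^3-2*x) in * by lra. rewrite (G_p1 b x y), e1. ring. }
      apply in_flat_map. exists x. split; [|apply in_pts; auto].
      apply in_or_app. destruct (Rlt_or_le 0 x) as [hxp|hxn].
      * left. apply HL1. auto.
      * right. assert (hxn' : x < 0) by lra.
        assert (hh : 4*x^3+2*x+a < 0).
        { unfold P2 in hP. assert (0 < y^2) by (apply pow_lt_compat_l || nra). nra. }
        assert (hlt : x < -c).
        { destruct (Rlt_or_le x (-c)) as [h|h]; auto. exfalso.
          assert (E : 4*x^3+2*x+a = (x+c)*(4*(x^2 - x*c + c^2) + 2)) by (rewrite <- hca; ring).
          assert (0 <= (x+c)*(4*(x^2 - x*c + c^2) + 2)).
          { apply Rmult_le_pos; [lra|]. nra. }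
          lra. }
        replace x with (-c - (-c - x)) by ring. apply in_map.
        apply HL2. split; [lra|]. rewrite <- G_shift, hca. replace (-c - (-c-x)) with x by ring. auto.
  - rewrite length_app, length_map, pts_len, length_app, length_map. lia.
Qed.

Lemma sq_case u r : u = r^2 -> r = sqrt u \/ r = - sqrt u.
Proof.
  intros ->. replace (r^2) with (Rsqr r) by (unfold Rsqr; ring).
  rewrite sqrt_Rsqr_abs. unfold Rabs. destruct (Rcase_abs r); [right; ring|left; reflexivity].
Qed.

Lemma sqrt_of_sq m T : 0 <= m -> m^2 = T -> sqrt T = m.
Proof. intros hm <-. replace (m^2) with (Rsqr m) by (unfold Rsqr; ring). apply sqrt_Rsqr; auto. Qed.

Definition w0 b := (sqrt (1+4*b) - 1)/2.
Definition v0 b := (sqrt (4-4*b) - 1)/4.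

Definition L_zero (b : R) (L0 : list R) : list C :=
  map (fun x => (x,0)) L0 ++ ((0, sqrt (w0 b)) :: (0, - sqrt (w0 b)) ::
  (sqrt (v0 b), sqrt (v0 b + 1/2)) :: (sqrt (v0 b), - sqrt (v0 b + 1/2)) ::
  (- sqrt (v0 b), sqrt (v0 b + 1/2)) :: (- sqrt (v0 b), - sqrt (v0 b + 1/2)) :: nil).

Lemma cover_zero_nonreal b x y : y <> 0 -> Defs.f 0 b (x,y) = 0 ->
  In (x,y) ((0, sqrt (w0 b)) :: (0, - sqrt (w0 b)) ::
  (sqrt (v0 b), sqrt (v0 b + 1/2)) :: (sqrt (v0 b), - sqrt (v0 b + 1/2)) ::
  (- sqrt (v0 b), sqrt (v0 b + 1/2)) :: (- sqrt (v0 b), - sqrt (v0 b + 1/2)) :: nil).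
Proof.
  intros hy Hz. apply zero_iff in Hz. destruct Hz as [e1 e2].
  assert (hP : P2 0 x y = 0) by (apply Rmult_integral in e2; destruct e2; [contradiction|auto]).
  unfold P2, p1 in *.
  destruct (Req_dec x 0) as [hx|hx].
  - subst x. assert (E : sqrt (1+4*b) = 2*y^2+1).
    { apply sqrt_of_sq. nra. nra. }
    assert (hw : w0 b = y^2) by (unfold w0; rewrite E; field).
    destruct (sq_case (w0 b) y hw) as [-> | ->]; simpl; auto.
  - assert (hy2 : y^2 = x^2 + 1/2).
    { assert (x * (4*y^2 - 4*x^2 - 2) = 0) by nra.
      apply Rmult_integral in H. destruct H; [contradiction|lra]. }
    assert (e1' : -4*x^4 - 2*x^2 + 3/4 - b = 0).
    { assert (y^4 = (x^2+1/2)^2) by (replace (y^4) with ((y^2)^2) by ring; rewrite hy2; ring).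
      assert (x^2*y^2 = x^2*(x^2+1/2)) by (rewrite hy2; ring).
      lra. }
    assert (E : sqrt (4-4*b) = 4*x^2+1).
    { apply sqrt_of_sq. nra. nra. }
    assert (hv : v0 b = x^2) by (unfold v0; rewrite E; field).
    assert (hv2 : v0 b + 1/2 = y^2) by lra.
    destruct (sq_case (v0 b) x hv) as [-> | ->];
    destruct (sq_case (v0 b + 1/2) y hv2) as [-> | ->]; simpl; auto 7.
Qed.

Lemma cover_zero b : exists L, (forall z, Defs.f 0 b z = 0 -> In z L) /\ (length L <= 10)%nat.
Proof.
  destruct (q_cover 0 b) as [L0 [HL0 hl0]].
  exists (L_zero b L0). split.
  - intros [x y] Hz. unfold L_zero. apply in_or_app.
    destruct (Req_dec y 0) as [hy|hy].
    + left. subst y. apply (in_map (fun x => (x,0))). apply HL0.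
      apply zero_iff in Hz. destruct Hz as [e1 _]. unfold q. unfold p1 in e1. lra.
    + right. apply cover_zero_nonreal; auto.
  - unfold L_zero. rewrite length_app, length_map. simpl. lia.
Qed.

Lemma big_bounds a b M : 0 <= a -> M = 2 + a + Rabs b ->
  0 < G a b M /\ 0 < G a b (-M) /\ 0 < q a b M /\ 0 < q a b (-M).
Proof.
  intros ha hM.
  assert (hb1 : b <= Rabs b) by apply RRle_abs.
  assert (hb2 : -b <= Rabs b) by (rewrite <- Rabs_Ropp; apply RRle_abs).
  assert (hab : 0 <= Rabs b) by apply Rabs_pos.
  assert (h2 : 2 <= M) by lra. assert (haM : a <= M) by lra.
  assert (hbM : -M <= b <= M) by lra.
  assert (M2 : 4 <= M^2) by nra.
  assert (M3 : M^2 <= M^3) by (simpl; nra).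
  assert (M6 : 8 * M^3 <= M^6) by (replace (M^6) with (M^3*M^3) by ring; assert (8 <= M^3) by nra; nra).
  assert (A1 : a*M <= M^2) by nra.
  assert (A2 : a^2 <= M^2) by nra.
  assert (A3 : -M^3 <= b*M^2) by nra.
  assert (A4 : b * M^2 <= M^3) by nra.
  assert (A5 : 0 <= a*M^3) by (apply Rmult_le_pos; [lra|]; apply pow_le; lra).
  assert (A6 : a*M^3 <= M^4) by (replace (M^4) with (M*M^3) by ring; apply Rmult_le_compat_r; [apply pow_le|]; lra).
  assert (A7 : 0 <= M^4) by (apply pow_le; lra).
  unfold G, q. repeat split.
  - replace ((-M)^6) with (M^6) by ring. nra.
  - replace ((-M)^6) with (M^6) by ring. replace ((-M)^4) with (M^4) by ring.
    replace ((-M)^3) with (-M^3) by ring. replace ((-M)^2) with (M^2) by ring. nra.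
  - assert (M^4 >= 4*M^2) by (replace (M^4) with (M^2*M^2) by ring; nra). nra.
  - replace ((-M)^4) with (M^4) by ring. replace ((-M)^2) with (M^2) by ring.
    assert (M^4 >= 4*M^2) by (replace (M^4) with (M^2*M^2) by ring; nra). nra.
Qed.

Lemma pts_zero a b x : x <> 0 -> 0 < s a x -> G a b x = 0 -> forall z, In z (pts a x) -> Defs.f a b z = 0.
Proof.
  intros hx hs hG z Hz.
  assert (key : forall y, y^2 = s a x -> Defs.f a b (x,y) = 0).
  { intros y hy. apply zero_iff.
    assert (hP : P2 a x y = 0) by (unfold P2; rewrite hy; unfold s; field; auto).
    split; [|rewrite hP; ring].
    assert (ha : a = 4*x*y^2-4*x^3-2*x) by (unfold P2 in hP; lra).
    rewrite ha in hG. rewrite G_p1 in hG. rewrite ha.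
    assert (x^2 <> 0) by (apply pow_nonzero; auto).
    apply Rmult_integral in hG. destruct hG as [h|h]; auto.
    exfalso. apply H. lra. }
  unfold pts in Hz. simpl in Hz.
  destruct Hz as [<-|[<-|[]]]; apply key.
  - rewrite <- Rsqr_pow2. apply Rsqr_sqrt. lra.
  - replace ((- sqrt (s a x))^2) with ((sqrt (s a x))^2) by ring. rewrite <- Rsqr_pow2. apply Rsqr_sqrt. lra.
Qed.

Lemma NoDup4 (z1 z2 z3 z4 : C) : z1 <> z2 -> z1 <> z3 -> z1 <> z4 -> z2 <> z3 -> z2 <> z4 -> z3 <> z4 ->
  NoDup (z1 :: z2 :: z3 :: z4 :: nil).
Proof.
  intros. repeat constructor; simpl; intuition congruence.
Qed.

Lemma pne1 (x y x' y' : R) : x <> x' -> (x,y) <> (x',y').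
Proof. intros h e. injection e. intros; auto. Qed.
Lemma pne2 (x y x' y' : R) : y <> y' -> (x,y) <> (x',y').
Proof. intros h e. injection e. intros; auto. Qed.

Lemma G_at_c c b : G (4*c^3+2*c) b (-c) = -16*c^2 * q (4*c^3+2*c) b (-c).
Proof. unfold G, q. ring. Qed.

Lemma D1_deg c : Delta1 (4*c^3+2*c) (5*c^4+c^2) = 0.
Proof. unfold Delta1. ring. Qed.

Lemma h_mono c x : x < -c -> 0 < c -> 4*x^3+2*x+(4*c^3+2*c) < 0.
Proof.
  intros hx hc. assert (E : 4*x^3+2*x+(4*c^3+2*c) = (x+c)*(4*(x^2 - x*c + c^2) + 2)) by ring.
  rewrite E. assert (0 < 4*(x^2 - x*c + c^2) + 2) by nra. nra.
Qed.

Lemma s_pos_neg a x : x < 0 -> 4*x^3+2*x+a < 0 -> 0 < s a x.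
Proof. intros hx hh. unfold s. apply Rdiv_neg_neg; lra. Qed.
Lemma s_pos_pos a x : 0 < a -> 0 < x -> 0 < s a x.
Proof. intros ha hx. unfold s. apply Rdiv_lt_0_compat; [|lra]. assert (0 < x^3) by (apply pow_lt; lra). lra. Qed.

Lemma lower_pos a b : 0 < a -> Delta1 a b * Delta2 a b * Delta3 a b <> 0 ->
  exists l, NoDup l /\ (forall z, In z l -> Defs.f a b z = 0) /\ length l = 4%nat.
Proof.
  intros ha hD. destruct (h_root a ha) as [c [hc hca]].
  set (M := 2 + a + Rabs b).
  destruct (big_bounds a b M) as [gM [gmM [qM qmM]]]; [lra|reflexivity|].
  assert (hM : c < M).
  { unfold M. assert (0 <= Rabs b) by apply Rabs_pos. assert (0 < c^3) by (apply pow_lt; lra). lra. }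
  destruct (IVT (fun x => G a b x) 0 M) as [xi [[hxi1 hxi2] exi]].
  { unfold G; reg. } { lra. } { unfold G. simpl. assert (0 < a*a) by nra. lra. } { auto. }
  assert (hxi : 0 < xi).
  { destruct hxi1 as [h|h]; auto. subst xi. unfold G in exi. simpl in exi. nra. }
  assert (Zxi := pts_zero a b xi ltac:(lra) (s_pos_pos a xi ha hxi) exi).
  assert (sxi := s_pos_pos a xi ha hxi). assert (sq1 : 0 < sqrt (s a xi)) by (apply sqrt_lt_R0; auto).
  assert (Gc := G_at_c c b). rewrite hca in Gc.
  destruct (Rtotal_order (q a b (-c)) 0) as [hq|[hq|hq]].
  -
    destruct (IVT (fun x => - q a b x) (-M) (-c)) as [r1 [[h11 h12] er1]].
    { unfold q; reg. } { lra. } { lra. } { lra. }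
    destruct (IVT (fun x => q a b x) (-c) M) as [r2 [[h21 h22] er2]].
    { unfold q; reg. } { lra. } { lra. } { lra. }
    assert (r1 <> -c) by (intro; subst r1; lra).
    assert (r2 <> -c) by (intro; subst r2; lra).
    assert (zr : forall r, q a b r = 0 -> Defs.f a b (r,0) = 0).
    { intros r hr. apply zero_iff. split; [unfold p1; unfold q in hr; lra|ring]. }
    exists ((r1,0) :: (r2,0) :: (xi, sqrt (s a xi)) :: (xi, - sqrt (s a xi)) :: nil).
    split; [|split].
    + apply NoDup4; first [apply pne1; lra | apply pne2; lra].
    + intros z [<-|[<-|Hz]]. apply zr; lra. apply zr; lra. apply Zxi. exact Hz.
    + reflexivity.
  - exfalso. apply hD. unfold q in hq.
    assert (hb : b = 5*c^4+c^2) by (rewrite <- hca in hq; nra).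
    rewrite hb, <- hca, D1_deg. ring.
  - destruct (IVT (fun x => - G a b x) (-M) (-c)) as [x1 [[h11 h12] ex1]].
    { unfold G; reg. } { lra. } { lra. } { assert (0 < c^2) by (apply pow_lt; lra). nra. }
    assert (x1 <> -c) by (intro; subst x1; assert (0 < c^2) by (apply pow_lt; lra); nra).
    assert (hx1 : x1 < -c) by lra.
    assert (hh := h_mono c x1 hx1 hc). rewrite hca in hh.
    assert (sx1 := s_pos_neg a x1 ltac:(lra) hh).
    assert (sq2 : 0 < sqrt (s a x1)) by (apply sqrt_lt_R0; auto).
    assert (Zx1 := pts_zero a b x1 ltac:(lra) sx1 ltac:(lra)).
    exists ((x1, sqrt (s a x1)) :: (x1, - sqrt (s a x1)) :: (xi, sqrt (s a xi)) :: (xi, - sqrt (s a xi)) :: nil).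
    split; [|split].
    + apply NoDup4; first [apply pne1; lra | apply pne2; lra].
    + intros z [<-|[<-|Hz]]. apply Zx1; simpl; auto. apply Zx1; simpl; auto. apply Zxi. exact Hz.
    + reflexivity.
Qed.

Lemma zero0 b x y X Y : x^2 = X -> y^2 = Y -> X^2 + Y^2 - 6*X*Y - X + Y - b = 0 ->
  (x = 0 \/ 4*Y - 4*X - 2 = 0 \/ y = 0) -> Defs.f 0 b (x,y) = 0.
Proof.
  intros hX hY e h. apply zero_iff. unfold p1, P2. split.
  - replace (x^4) with ((x^2)^2) by ring. replace (y^4) with ((y^2)^2) by ring.
    rewrite hX, hY. lra.
  - replace (y * (4 * x * y ^ 2 - 4 * x ^ 3 - 2 * x - 0)) with (x*y*(4*y^2-4*x^2-2)) by ring.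
    rewrite hY, hX. destruct h as [->|[h| ->]]. ring. rewrite h. ring. ring.
Qed.

Lemma sq_sqrt u : 0 <= u -> (sqrt u)^2 = u.
Proof. intros h. rewrite <- Rsqr_pow2. apply Rsqr_sqrt. auto. Qed.
Lemma sq_msqrt u : 0 <= u -> (- sqrt u)^2 = u.
Proof. intros h. replace ((- sqrt u)^2) with ((sqrt u)^2) by ring. apply sq_sqrt; auto. Qed.

Lemma lower_zero b : exists l, NoDup l /\ (forall z, In z l -> Defs.f 0 b z = 0) /\ length l = 4%nat.
Proof.
  destruct (Rle_or_lt (3/4) b) as [hb|hb].
  - set (S := sqrt (1+4*b)).
    assert (hS : S^2 = 1+4*b) by (apply sq_sqrt; lra).
    assert (hS0 : 0 <= S) by apply sqrt_pos.
    assert (hS2 : 2 <= S) by nra.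
    set (m := (1+S)/2). set (w := (S-1)/2).
    assert (hm : 0 < sqrt m) by (apply sqrt_lt_R0; unfold m; lra).
    assert (hw : 0 < sqrt w) by (apply sqrt_lt_R0; unfold w; lra).
    exists ((sqrt m, 0) :: (- sqrt m, 0) :: (0, sqrt w) :: (0, - sqrt w) :: nil).
    split; [|split].
    + apply NoDup4; first [apply pne1; lra | apply pne2; lra].
    + assert (em : m^2 + 0^2 - 6*m*0^2 - m + 0^2 - b = 0) by (unfold m; nra).
      assert (ew : 0^2 + w^2 - 6*0^2*w - 0^2 + w - b = 0) by (unfold w; nra).
      intros z [<-|[<-|[<-|[<-|[]]]]].
      * apply (zero0 b _ _ m (0^2)); auto. apply sq_sqrt; unfold m; lra. lra.
      * apply (zero0 b _ _ m (0^2)); auto. apply sq_msqrt; unfold m; lra. lra.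
      * apply (zero0 b _ _ (0^2) w); auto. apply sq_sqrt; unfold w; lra. lra.
      * apply (zero0 b _ _ (0^2) w); auto. apply sq_msqrt; unfold w; lra. lra.
    + reflexivity.
  - set (V := sqrt (4-4*b)).
    assert (hV : V^2 = 4-4*b) by (apply sq_sqrt; lra).
    assert (hV0 : 0 <= V) by apply sqrt_pos.
    assert (hV1 : 1 < V) by nra.
    set (v := (V-1)/4).
    assert (hv : 0 < sqrt v) by (apply sqrt_lt_R0; unfold v; lra).
    assert (hv2 : 0 < sqrt (v+1/2)) by (apply sqrt_lt_R0; unfold v; lra).
    assert (ev : v^2 + (v+1/2)^2 - 6*v*(v+1/2) - v + (v+1/2) - b = 0) by (unfold v; nra).
    assert (ev2 : 4*(v+1/2) - 4*v - 2 = 0) by lra.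
    exists ((sqrt v, sqrt (v+1/2)) :: (sqrt v, - sqrt (v+1/2)) :: (- sqrt v, sqrt (v+1/2)) :: (- sqrt v, - sqrt (v+1/2)) :: nil).
    split; [|split].
    + apply NoDup4; first [apply pne1; lra | apply pne2; lra].
    + intros z [<-|[<-|[<-|[<-|[]]]]]; apply (zero0 b _ _ v (v+1/2)); auto;
        first [apply sq_sqrt | apply sq_msqrt]; unfold v; lra.
    + reflexivity.
Qed.

Lemma count_of a b (L : list C) (l4 : list C) m :
  (forall z, Defs.f a b z = 0 -> In z L) -> (length L <= m)%nat ->
  NoDup l4 -> (forall z, In z l4 -> Defs.f a b z = 0) ->
  exists n, num_zeros a b n /\ (length l4 <= n <= m)%nat.
Proof.
  intros HL hL hN H4.
  destruct (enum_from_cover (fun z => Defs.f a b z = 0) L HL) as [l [hl [Hl hlen]]].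
  exists (length l). split.
  - exists l. auto.
  - split; [|lia]. apply NoDup_incl_length; auto. intros z hz. apply Hl. auto.
Qed.

Lemma main_nonneg a b : 0 <= a -> Delta1 a b * Delta2 a b * Delta3 a b <> 0 ->
  exists n, num_zeros a b n /\ (4 <= n <= 10)%nat.
Proof.
  intros ha hD. destruct ha as [ha|ha].
  - destruct (cover_pos a b ha) as [L [HL hL]].
    destruct (lower_pos a b ha hD) as [l4 [h1 [h2 h3]]].
    destruct (count_of a b L l4 10 HL hL h1 h2) as [n [hn hn']]. exists n. split; auto. lia.
  - subst a. destruct (cover_zero b) as [L [HL hL]].
    destruct (lower_zero b) as [l4 [h1 [h2 h3]]].
    destruct (count_of 0 b L l4 10 HL hL h1 h2) as [n [hn hn']]. exists n. split; auto. lia.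
Qed.

Lemma f_opp a b z : Defs.f (-a) b (Copp z) = Defs.f a b z.
Proof. destruct z as [x y].
  unfold Defs.f, Cminus, Cmult, Cconj, Copp, Cplus, RtoC; simpl. f_equal; ring. Qed.

Lemma transport a b n : num_zeros (-a) b n -> num_zeros a b n.
Proof.
  intros [l [hN [Hl hlen]]]. exists (map Copp l). split; [|split].
  - apply NoDup_map_NoDup_ForallPairs; auto. intros z w _ _ e.
    destruct z, w. unfold Copp in e. simpl in e. injection e. intros. f_equal; lra.
  - intros z. rewrite in_map_iff. split.
    + intros [w [<- hw]]. rewrite <- f_opp. apply Hl in hw.
      destruct w. unfold Copp. simpl. replace (- - r) with r by ring. replace (- - r0) with r0 by ring. auto.
    + intros hz. exists (Copp z). split.
      * destruct z; unfold Copp; simpl; f_equal; ring.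
      * apply Hl. rewrite f_opp. auto.
  - rewrite length_map. auto.
Qed.

Lemma Delta_even a b : Delta1 (-a) b * Delta2 (-a) b * Delta3 (-a) b = Delta1 a b * Delta2 a b * Delta3 a b.
Proof. unfold Delta1, Delta2, Delta3. ring. Qed.

Lemma part1 : forall a b : R, Delta1 a b * Delta2 a b * Delta3 a b <> 0 ->
     exists n : nat, num_zeros a b n /\ (4 <= n <= 10)%nat.
Proof.
  intros a b hD. destruct (Rle_or_lt 0 a) as [ha|ha].
  - apply main_nonneg; auto.
  - destruct (main_nonneg (-a) b ltac:(lra) ltac:(rewrite Delta_even; auto)) as [n [hn hb]].
    exists n. split; auto. apply transport. auto.
Qed.

Lemma ex4 : exists a b : R, Delta1 a b * Delta2 a b * Delta3 a b <> 0 /\ num_zeros a b 4.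
Proof.
  exists 0, (-1). split.
  - assert (Delta1 0 (-1) > 0) by (unfold Delta1; lra).
    assert (Delta2 0 (-1) > 0) by (unfold Delta2; lra).
    assert (Delta3 0 (-1) < 0) by (unfold Delta3; lra).
    assert (0 < Delta1 0 (-1) * Delta2 0 (-1)) by nra. nra.
  - destruct (lower_zero (-1)) as [l4 [h1 [h2 h3]]].
    set (L := (sqrt (v0 (-1)), sqrt (v0 (-1) + 1/2)) :: (sqrt (v0 (-1)), - sqrt (v0 (-1) + 1/2)) ::
      (- sqrt (v0 (-1)), sqrt (v0 (-1) + 1/2)) :: (- sqrt (v0 (-1)), - sqrt (v0 (-1) + 1/2)) :: nil).
    assert (HL : forall z, Defs.f 0 (-1) z = 0 -> In z L).
    { intros [x y] Hz. destruct (Req_dec y 0) as [hy|hy].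
      - exfalso. subst y. apply zero_iff in Hz. destruct Hz as [e _]. unfold p1 in e.
        assert (0 < x^4 - x^2 + 1) by (replace (x^4) with ((x^2)^2) by ring; nra). lra.
      - assert (Hin := cover_zero_nonreal (-1) x y hy Hz).
        destruct Hin as [e|[e|Hin]]; [| |exact Hin]; injection e; intros; subst x;
        apply zero_iff in Hz; destruct Hz as [e1 _]; unfold p1 in e1;
        assert (0 < y^4 + y^2 + 1) by (replace (y^4) with ((y^2)^2) by ring; nra); lra. }
    destruct (enum_from_cover (fun z => Defs.f 0 (-1) z = 0) L HL) as [l [hl [Hl hlen]]].
    assert (4 <= length l)%nat.
    { rewrite <- h3. apply NoDup_incl_length; auto. intros z hz. apply Hl. auto. }
    exists l. split; auto. split; auto. simpl in hlen. lia.
Qed.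

Lemma ivt_up (g : R -> R) x y : continuity g -> x < y -> g x < 0 -> 0 < g y -> exists r, x < r < y /\ g r = 0.
Proof.
  intros hc hxy hx hy. destruct (IVT g x y hc hxy hx hy) as [r [[h1 h2] e]].
  exists r. split; auto. split.
  - destruct h1; auto. subst. lra.
  - destruct h2; auto. subst. lra.
Qed.
Lemma ivt_down (g : R -> R) x y : continuity g -> x < y -> 0 < g x -> g y < 0 -> exists r, x < r < y /\ g r = 0.
Proof.
  intros hc hxy hx hy. destruct (ivt_up (fun t => - g t) x y) as [r [h e]].
  - apply continuity_opp; auto.
  - auto.
  - lra.
  - lra.
  - exists r. split; auto. lra.
Qed.

Ltac dist := match goal with
  | |- (?x1,?y1) <> (?x2,?y2) => first [apply pne1; lra | apply pne2; lra] end.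

Lemma ex10 : exists a b : R, Delta1 a b * Delta2 a b * Delta3 a b <> 0 /\ num_zeros a b 10.
Proof.
  set (a := 1/2). set (b := 33/500). exists a, b. split.
  - assert (Delta1 a b < 0) by (unfold Delta1, a, b; lra).
    assert (Delta2 a b < 0) by (unfold Delta2, a, b; lra).
    assert (Delta3 a b < 0) by (unfold Delta3, a, b; lra).
    assert (0 < Delta1 a b * Delta2 a b) by nra. nra.
  - assert (cq : continuity (fun x => q a b x)) by (unfold q; reg).
    assert (cG : continuity (fun x => G a b x)) by (unfold G; reg).
    destruct (ivt_down _ (-3/5) (-1/2) cq) as [r1 [hr1 er1]]; try (unfold q, a, b; lra).
    destruct (ivt_up _ (-1/2) (-3/10) cq) as [r2 [hr2 er2]]; try (unfold q, a, b; lra).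
    destruct (ivt_down _ (-3/10) 0 cq) as [r3 [hr3 er3]]; try (unfold q, a, b; lra).
    destruct (ivt_up _ 0 2 cq) as [r4 [hr4 er4]]; try (unfold q, a, b; lra).
    destruct (ivt_down _ (-3/5) (-49/100) cG) as [x1 [hx1 ex1]]; try (unfold G, a, b; lra).
    destruct (ivt_up _ (-23/100) (-227/1000) cG) as [x2 [hx2 ex2]]; try (unfold G, a, b; lra).
    destruct (ivt_up _ 0 1 cG) as [x3 [hx3 ex3]]; try (unfold G, a, b; lra).
    assert (hmono : forall x, x < -227/1000 -> 4*x^3+2*x+a < 0).
    { intros x hx. assert (E : 4*x^3+2*x+a - (4*(-227/1000)^3+2*(-227/1000)+a)
         = (x - (-227/1000)) * (4*(x^2 + x*(-227/1000) + (-227/1000)^2) + 2)) by ring.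
      assert (0 < 4*(x^2 + x*(-227/1000) + (-227/1000)^2) + 2) by nra.
      assert (4*(-227/1000)^3+2*(-227/1000)+a < 0) by (unfold a; lra). nra. }
    assert (ha : 0 < a) by (unfold a; lra).
    assert (s1 := s_pos_neg a x1 ltac:(lra) (hmono x1 ltac:(lra))).
    assert (s2 := s_pos_neg a x2 ltac:(lra) (hmono x2 ltac:(lra))).
    assert (s3 := s_pos_pos a x3 ha ltac:(lra)).
    assert (q1 : 0 < sqrt (s a x1)) by (apply sqrt_lt_R0; auto).
    assert (q2 : 0 < sqrt (s a x2)) by (apply sqrt_lt_R0; auto).
    assert (q3 : 0 < sqrt (s a x3)) by (apply sqrt_lt_R0; auto).
    assert (Z1 := pts_zero a b x1 ltac:(lra) s1 ex1).
    assert (Z2 := pts_zero a b x2 ltac:(lra) s2 ex2).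
    assert (Z3 := pts_zero a b x3 ltac:(lra) s3 ex3).
    cbv beta in er1, er2, er3, er4.
    assert (zr : forall r, q a b r = 0 -> Defs.f a b (r,0) = 0).
    { intros r hr. apply zero_iff. split; [unfold p1; unfold q in hr; lra|ring]. }
    set (l10 := (r1,0) :: (r2,0) :: (r3,0) :: (r4,0) ::
      (x1, sqrt (s a x1)) :: (x1, - sqrt (s a x1)) ::
      (x2, sqrt (s a x2)) :: (x2, - sqrt (s a x2)) ::
      (x3, sqrt (s a x3)) :: (x3, - sqrt (s a x3)) :: nil).
    assert (hN : NoDup l10).
    { unfold l10. repeat constructor; simpl;
      repeat (apply and_not_or; split; [dist|]); tauto. }
    assert (hZ : forall z, In z l10 -> Defs.f a b z = 0).
    { intros z hz. unfold l10 in hz. simpl in hz.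
      destruct hz as [<-|[<-|[<-|[<-|[<-|[<-|[<-|[<-|[<-|[<-|[]]]]]]]]]]];
      first [apply zr; assumption | apply Z1; simpl; tauto | apply Z2; simpl; tauto | apply Z3; simpl; tauto]. }
    destruct (cover_pos a b ha) as [L [HL hL]].
    destruct (enum_from_cover (fun z => Defs.f a b z = 0) L HL) as [l [hl [Hl hlen]]].
    assert (10 <= length l)%nat.
    { change 10%nat with (length l10). apply NoDup_incl_length; auto. intros z hz. apply Hl. auto. }
    exists l. split; auto. split; auto. lia.
Qed.

Theorem mainTheorem1 :
  (forall a b : R, Delta1 a b * Delta2 a b * Delta3 a b <> 0 ->
     exists n : nat, num_zeros a b n /\ (4 <= n <= 10)%nat) /\
  (exists a b : R, Delta1 a b * Delta2 a b * Delta3 a b <> 0 /\ num_zeros a b 4) /\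
  (exists a b : R, Delta1 a b * Delta2 a b * Delta3 a b <> 0 /\ num_zeros a b 10).
Proof. split; [exact part1|split; [exact ex4|exact ex10]]. Qed.
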